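(* Let $\mathcal{H}_Q$ and $\mathcal{H}_A$ be finite-dimensional Hilbert spaces with $\dim\mathcal{H}_Q = D_Q \le D_A = \dim\mathcal{H}_A$, and let $U_1,\ldots,U_K$ be unitary operators on $\mathcal{H}_Q$ that mutually commute. Then for every unit vector $|\psi_{QA}\rangle \in \mathcal{H}_Q\otimes\mathcal{H}_A$ (possibly entangled) there exist unit vectors $|\xi\rangle\in\mathcal{H}_Q$, $|\chi\rangle\in\mathcal{H}_A$ and a unitary operator $V$ on $\mathcal{H}_Q\otimes\mathcal{H}_A$, independent of $j$, such that for every $j=1,\ldots,K$, $$V\,(U_j\otimes \mathbb{1}_A)\,(|\xi\rangle\otimes|\chi\rangle) = (U_j\otimes\mathbb{1}_A)\,|\psi_{QA}\rangle ,$$ where $\mathbb{1}_A$ is the identity on $\mathcal{H}_A$. *)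

(* Defs.v *)
From HB Require Import structures.
From mathcomp Require Import all_boot all_order all_algebra.
From mathcomp Require Import complex mxtens.
From mathcomp Require Import reals.

Set Implicit Arguments.
Unset Strict Implicit.
Unset Printing Implicit Defensive.

Import Order.TTheory GRing.Theory Num.Theory.
Local Open Scope ring_scope.

Definition adjmx {C : numClosedFieldType} {m n : nat} (A : 'M[C]_(m, n))
  : 'M[C]_(n, m) := (map_mx Num.conj A)^T.

Definition unitary {C : numClosedFieldType} {n : nat} (U : 'M[C]_n) : Prop :=
  adjmx U *m U = 1%:M /\ U *m adjmx U = 1%:M.

Definition unit_vec {C : numClosedFieldType} {n : nat} (v : 'cV[C]_n) : Prop :=
  (adjmx v *m v) 0 0 = 1.

(* Main.v *)
Require Import Defs.
From HB Require Import structures.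
From mathcomp Require Import all_boot all_order all_algebra.
From mathcomp Require Import complex mxtens.
From mathcomp Require Import reals.
From mathcomp Require Import sesquilinear spectral mxred.
Import Order.TTheory GRing.Theory Num.Theory.
Local Open Scope ring_scope.

Section Helpers.
Set Implicit Arguments.
Variable C : numClosedFieldType.

Lemma adjmxE m n (A : 'M[C]_(m, n)) : adjmx A = map_mx Num.conj (A^T).
Proof. by rewrite /adjmx map_trmx. Qed.

Lemma adjmx_mul m n p (A : 'M[C]_(m, n)) (B : 'M[C]_(n, p)) :
  adjmx (A *m B) = adjmx B *m adjmx A.
Proof. by rewrite /adjmx map_mxM trmx_mul. Qed.

Lemma adjmxK m n (A : 'M[C]_(m, n)) : adjmx (adjmx A) = A.
Proof. by apply/matrixP => i j; rewrite /adjmx !mxE conjCK. Qed.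

Lemma adjmx1 n : adjmx (1%:M : 'M[C]_n) = 1%:M.
Proof. by apply/matrixP => i j; rewrite /adjmx !mxE eq_sym; case: eqP; rewrite ?conjC1 ?conjC0. Qed.

Lemma adjmx_tens m n p q (A : 'M[C]_(m, n)) (B : 'M[C]_(p, q)) :
  adjmx (A *t B) = adjmx A *t adjmx B.
Proof. by rewrite /adjmx map_mxT trmx_tens. Qed.

Lemma tens11 m n : (1%:M : 'M[C]_m) *t (1%:M : 'M[C]_n) = 1%:M.
Proof.
apply/matrixP => i j.
case: (mxtens_indexP i) => i1 i2; case: (mxtens_indexP j) => j1 j2.
rewrite tensmxE !mxE (can_eq (@mxtens_indexK m n)) xpair_eqE.
by case: (i1 == j1); case: (i2 == j2); rewrite ?mulr1 ?mulr0 ?mul0r.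
Qed.

Lemma unitary_mul n (A B : 'M[C]_n) : unitary A -> unitary B -> unitary (A *m B).
Proof.
move=> [A1 A2] [B1 B2]; rewrite /unitary adjmx_mul; split.
  by rewrite mulmxA -(mulmxA _ _ A) A1 mulmx1 B1.
by rewrite mulmxA -(mulmxA _ B) B2 mulmx1 A2.
Qed.

Lemma unitary_tens n m (A : 'M[C]_n) (B : 'M[C]_m) : unitary A -> unitary B -> unitary (A *t B).
Proof.
move=> [A1 A2] [B1 B2]; rewrite /unitary adjmx_tens !tensmx_mul A1 A2 B1 B2.
by rewrite tens11.
Qed.

Lemma unitary1 n : unitary (1%:M : 'M[C]_n).
Proof. by rewrite /unitary adjmx1 mulmx1. Qed.

Lemma sum_tens (V : nmodType) m n (F : 'I_(m * n) -> V) :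
  \sum_(i < m * n) F i = \sum_(k < m) \sum_(b < n) F (mxtens_index (k, b)).
Proof.
rewrite pair_big /=.
rewrite (reindex (@mxtens_index m n)) /=.
  by apply: eq_bigr => -[].
by exists (@mxtens_unindex m n) => i _; rewrite (mxtens_indexK, mxtens_unindexK).
Qed.

Lemma unit_vec_gt0 n (v : 'cV[C]_n) : unit_vec v -> (0 < n)%N.
Proof.
rewrite /unit_vec mxE; case: n v => // v.
rewrite big1; last by case.
by move=> /eqP; rewrite eq_sym oner_eq0.
Qed.


Lemma first_col m (a : 'cV[C]_m.+1) :
  exists M : 'M[C]_m.+1, unitary M /\ exists c, forall i, c * M i 0 = a i 0.
Proof.
pose A : 'M[C]_m.+1 := \matrix_(i, j) (a j 0).
pose S := schmidt A.
have Su : S \is unitarymx := schmidt_unitarymx A (leqnn _).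
have := row_schmidt_sub A 0.
rewrite (big_pred1 0); last by move=> k; rewrite /= leqn0.
rewrite genmxE => /submxP [D HD].
have U1 : S *m map_mx Num.conj S^T = 1%:M by apply/unitarymxP.
have U2 := mulmx1C U1.
exists S^T; split.
  rewrite /unitary /adjmx map_trmx trmxK; split.
    by have := congr1 trmx U1; rewrite trmx_mul trmx1 map_trmx trmxK.
  by have := congr1 trmx U2; rewrite trmx_mul trmx1 map_trmx trmxK.
exists (D 0 0) => i.
have := congr1 (fun X : 'rV_m.+1 => X 0 i) HD.
by rewrite /= !mxE big_ord1 !mxE => <-.
Qed.


Lemma comm_adj n (A B : 'M[C]_n) : unitary B -> A *m B = B *m A ->
  A *m adjmx B = adjmx B *m A.
Proof.
move=> [B1 B2] AB; symmetry.
rewrite -[adjmx B *m A]mulmx1 -B2 mulmxA -(mulmxA (adjmx B)) AB.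
by rewrite !mulmxA B1 mul1mx.
Qed.

Lemma adjmx_unitaryE n (P : 'M[C]_n) : P \is unitarymx -> unitary (adjmx P).
Proof.
move=> /unitarymxP H1.
have H1' : P *m adjmx P = 1%:M by rewrite /adjmx map_trmx.
by rewrite /unitary adjmxK; split => //; apply: mulmx1C.
Qed.

Lemma codiag n K (U : 'I_K -> 'M[C]_n) : (forall j, unitary (U j)) ->
  (forall j k, U j *m U k = U k *m U j) ->
  exists Q : 'M[C]_n, unitary Q /\ forall j, exists D : 'M[C]_n,
    (forall i k, i != k -> D i k = 0) /\ U j = Q *m D *m adjmx Q.
Proof.
move=> hU hcomm.
pose As := [seq U j | j <- enum 'I_K] ++ [seq adjmx (U j) | j <- enum 'I_K].
have Hc : {in As &, forall A B, comm_mx A B}.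
  move=> A B; rewrite !mem_cat => /orP [] /mapP [j _ ->] /orP [] /mapP [k _ ->];
    rewrite /comm_mx.
  - exact: hcomm.
  - exact: comm_adj.
  - by symmetry; apply: comm_adj.
  - by rewrite -!adjmx_mul hcomm.
have [P Pu /allP HP] := cotrigonalization Hc.
have Qu := @adjmx_unitaryE n P Pu.
exists (adjmx P); split => // j.
pose D := P *m U j *m adjmx P.
have eD : conjmx P (U j) = D by rewrite conjymx // /D /adjmx map_trmx.
have eD' : conjmx P (adjmx (U j)) = adjmx D.
  have tC : map_mx Num.conj P^T = adjmx P by rewrite /adjmx map_trmx.
  by rewrite conjymx // tC /D !adjmx_mul adjmxK !mulmxA.
have T1 : is_trig_mx D.
  by rewrite -eD; apply: (HP (U j)); rewrite mem_cat; apply/orP; left; apply: map_f; rewrite mem_enum.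
have T2 : is_trig_mx (adjmx D).
  by rewrite -eD'; apply: (HP (adjmx (U j))); rewrite mem_cat; apply/orP; right; apply: map_f; rewrite mem_enum.
exists D; split.
  move=> i k; rewrite neq_ltn => /orP [] lt.
    by move/is_trig_mxP: T1; apply.
  move/is_trig_mxP: T2 => /(_ k i lt) /eqP.
  by rewrite /adjmx !mxE conjC_eq0 => /eqP.
have [Q1 Q2] := Qu; rewrite adjmxK in Q1 Q2 *.
by rewrite /D !mulmxA Q2 mul1mx -mulmxA Q2 mulmx1.
Qed.


Lemma sum_delta_r n (F : 'I_n -> C) j : \sum_(i < n) F i * (i == j)%:R = F j.
Proof.
rewrite (bigD1 j) //= eqxx mulr1 big1 ?addr0 // => i /negPf ->.
by rewrite mulr0.
Qed.

Lemma sum_delta_l n (F : 'I_n -> C) j : \sum_(i < n) (j == i)%:R * F i = F j.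
Proof.
rewrite -[RHS](sum_delta_r F j); apply: eq_bigr => i _.
by rewrite mulrC eq_sym.
Qed.

Lemma mul_diag_tens_r p n m (X : 'M[C]_(p, n * m)) (D : 'M[C]_n) i l b :
  (forall i k, i != k -> D i k = 0) ->
  (X *m (D *t 1%:M)) i (mxtens_index (l, b)) = X i (mxtens_index (l, b)) * D l l.
Proof.
move=> HD; rewrite mxE sum_tens (bigD1 l) //= [X in _ + X]big1 ?addr0.
  rewrite -[RHS](sum_delta_r (fun b' => X i (mxtens_index (l, b')) * D l l) b).
  by apply: eq_bigr => b' _; rewrite tensmxE !mxE mulrA.
move=> k nk; apply: big1 => b' _.
by rewrite tensmxE HD ?mul0r ?mulr0.
Qed.

Lemma mul_diag_tens_l n m q (D : 'M[C]_n) (X : 'M[C]_(n * m, q)) k a j :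
  (forall i k, i != k -> D i k = 0) ->
  ((D *t 1%:M) *m X) (mxtens_index (k, a)) j = D k k * X (mxtens_index (k, a)) j.
Proof.
move=> HD; rewrite mxE sum_tens (bigD1 k) //= [X in _ + X]big1 ?addr0.
  rewrite -[RHS](sum_delta_l (fun a' => D k k * X (mxtens_index (k, a')) j) a).
  by apply: eq_bigr => a' _; rewrite tensmxE !mxE mulrCA mulrA.
move=> l nl; apply: big1 => b' _.
by rewrite tensmxE HD ?mul0r // eq_sym.
Qed.

End Helpers.
Theorem theorem2 (R : realType) (DQ DA K : nat) (hD : (DQ <= DA)%N)
  (U : 'I_K -> 'M[R[i]]_DQ)
  (hU : forall j, unitary (U j))
  (hcomm : forall j k, U j *m U k = U k *m U j)
  (psi : 'cV[R[i]]_(DQ * DA)) (hpsi : unit_vec psi) :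
  exists (xi : 'cV[R[i]]_DQ) (chi : 'cV[R[i]]_DA) (V : 'M[R[i]]_(DQ * DA)),
    [/\ unit_vec xi, unit_vec chi, unitary V &
      forall j, V *m ((U j *t 1%:M) *m (xi *t chi)) = (U j *t 1%:M) *m psi].
Proof.
have n0 := unit_vec_gt0 hpsi.
have [Q [Qu HD]] := codiag U hU hcomm.
have [Q1 Q2] := Qu.
move: n0; rewrite muln_gt0 => /andP [_ DA0].
case: DA DA0 hD psi hpsi => // m _ hD psi hpsi.
pose phi := (adjmx Q *t 1%:M) *m psi.
have phiE : phi = (adjmx Q *t 1%:M) *m psi by [].
clearbody phi.
pose a (k : 'I_DQ) : 'cV[R[i]]_m.+1 := \col_b phi (mxtens_index (k, b)) 0.
have aE k b : a k b 0 = phi (mxtens_index (k, b)) 0 by rewrite mxE.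
clearbody a.
have [M HM] := fin_all_exists (fun k => @first_col _ _ (a k)).
have [Mu Hc] : (forall k, unitary (M k)) /\ (forall k, exists c, forall i, c * M k i 0 = a k i 0).
  by split => k; case: (HM k).
have [c hc] := fin_all_exists Hc.
pose chi : 'cV[R[i]]_m.+1 := delta_mx 0 0.
pose cv : 'cV[R[i]]_DQ := \col_k c k.
pose xi := Q *m cv.
pose B : 'M[R[i]]_(DQ * m.+1) := \matrix_(i, j)
  (((mxtens_unindex i).1 == (mxtens_unindex j).1)%:R *
    M (mxtens_unindex i).1 (mxtens_unindex i).2 (mxtens_unindex j).2).
have BE k a' l b : B (mxtens_index (k, a')) (mxtens_index (l, b)) = (k == l)%:R * M k a' b.
  by rewrite mxE !mxtens_indexK.
have B0 p (X : 'M[R[i]]_(DQ * m.+1, p)) k a' j :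
    (B *m X) (mxtens_index (k, a')) j = \sum_b M k a' b * X (mxtens_index (k, b)) j.
  rewrite mxE sum_tens (bigD1 k) //= [X in _ + X]big1 ?addr0.
    by apply: eq_bigr => b _; rewrite BE eqxx mul1r.
  move=> k' nk; apply: big1 => b _.
  by rewrite BE eq_sym (negbTE nk) mul0r mul0r.
clearbody B.
have Bu : unitary B.
  have H : B *m adjmx B = 1%:M.
    apply/matrixP => i j.
    case: (mxtens_indexP i) => k a'; case: (mxtens_indexP j) => l b.
    rewrite B0 [RHS]mxE (can_eq (@mxtens_indexK _ _)) xpair_eqE.
    under eq_bigr do rewrite /adjmx !mxE BE.
    case: (eqVneq k l) => [<-|nkl].
      under eq_bigr do rewrite mul1r.
      have := (Mu k).2 => /matrixP/(_ a' b); rewrite /adjmx !mxE => <-.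
      by apply: eq_bigr => b' _; rewrite !mxE.
    rewrite /= big1 // => b' _.
    by rewrite mul0r rmorph0 mulr0.
  by split => //; apply: mulmx1C.
have Bc : B *m (cv *t chi) = phi.
  apply/matrixP => i j; rewrite [j]ord1.
  case: (mxtens_indexP i) => k a'.
  rewrite B0.
  rewrite -aE -hc.
  have o1 (x : 'I_1) : (x == 0) = true by rewrite ord1 eqxx.
  under eq_bigr => b _ do rewrite mxE mxtens_indexK /= !mxE o1 andbT mulrA.
  by rewrite sum_delta_r mulrC.
have chiU : unit_vec chi.
  rewrite /unit_vec mxE (bigD1 0) //= [X in _ + X]big1 ?addr0.
    by rewrite /adjmx !mxE eqxx rmorph1 mulr1.
  by move=> b nb; rewrite /adjmx !mxE (negbTE nb) /= rmorph0 mulr0.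
have phiN : (adjmx phi *m phi) 0 0 = 1.
  rewrite phiE adjmx_mul adjmx_tens adjmxK adjmx1 mulmxA -(mulmxA (adjmx psi)).
  by rewrite tensmx_mul Q2 mulmx1 tens11 mulmx1.
have xiU : unit_vec xi.
  rewrite /unit_vec /xi adjmx_mul -mulmxA (mulmxA (adjmx Q)) Q1 mul1mx -phiN.
  rewrite !mxE sum_tens; apply: eq_bigr => k _.
  have Mk : \sum_b Num.conj (M k b 0) * M k b 0 = 1.
    transitivity ((adjmx (M k) *m M k) 0 0); last by rewrite (Mu k).1 mxE eqxx.
    by rewrite /adjmx mxE; apply: eq_bigr => b _; rewrite !mxE.
  rewrite /adjmx !mxE.
  transitivity (Num.conj (c k) * c k * \sum_b Num.conj (M k b 0) * M k b 0).
    by rewrite Mk mulr1.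
  rewrite mulr_sumr; apply: eq_bigr => b _.
  by rewrite !mxE -aE -hc rmorphM mulrACA.
have Qau : unitary (adjmx Q) by rewrite /unitary adjmxK.
exists xi, chi, ((Q *t 1%:M) *m B *m (adjmx Q *t 1%:M)); split => //.
  apply: unitary_mul; last exact: unitary_tens Qau (unitary1 _ _).
  by apply: unitary_mul => //; apply: unitary_tens Qu (unitary1 _ _).
move=> j.
have [D [Dd UE]] := HD j.
have E1 : (U j *t 1%:M) *m (xi *t chi) = (Q *t 1%:M) *m ((D *t 1%:M) *m (cv *t chi)).
  by rewrite UE /xi !tensmx_mul !mul1mx !mulmxA -(mulmxA (Q *m D) (adjmx Q)) Q1 mulmx1.
have E2 : (U j *t 1%:M) *m psi = (Q *t 1%:M) *m ((D *t 1%:M) *m phi).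
  by rewrite phiE UE !mulmxA !tensmx_mul !mulmx1.
have BD : B *m (D *t 1%:M) = (D *t 1%:M) *m B.
  apply/matrixP => i j'; case: (mxtens_indexP i) => k a'; case: (mxtens_indexP j') => l b.
  rewrite mul_diag_tens_r; last exact: Dd.
  rewrite mul_diag_tens_l; last exact: Dd.
  rewrite BE; case: (eqVneq k l) => [->|nkl]; first by rewrite mulrC.
  by rewrite !mul0r mulr0.
have QQ : (adjmx Q *t (1%:M : 'M[R[i]]_m.+1)) *m (Q *t 1%:M) = 1%:M.
  by rewrite tensmx_mul Q1 mulmx1 tens11.
rewrite E1 E2 -Bc !mulmxA -(mulmxA _ (adjmx Q *t 1%:M)) QQ mulmx1.
by rewrite -(mulmxA (Q *t 1%:M) B (D *t 1%:M)) BD !mulmxA.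
Qed.
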